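(* Let $(Y,\|\cdot\|)$ be a Banach space, $(T_t)_{t\ge0}$ a strongly continuous semigroup of bounded linear operators on $Y$ with infinitesimal generator $L$ and domain $D(L)$. Let $A$ be a linear operator defined on a linear subspace $D(A)\subset Y$ with values in $Y$. Assume $\xi\colon\mathbb{R}\to D(A)$ is such that $t\mapsto\xi(t)$ is differentiable in $Y$, $t\mapsto\xi'(t)$ is continuous in $Y$, $t\mapsto A\xi(t)$ is continuous in $Y$, $t\mapsto\xi(t)$ has compact support in $\mathbb{R}$, and $$\int_s^\infty T_{u-s}\big[\xi'(u)+A\xi(u)\big]\,du=-\xi(s),\qquad s\in\mathbb{R}$$ (Riemann integral of a $Y$-valued function). Then $\xi(t)\in D(L)$ and $L\xi(t)=A\xi(t)$ for all $t\in\mathbb{R}$. *)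

(* Defs.v *)
From HB Require Import structures.
From mathcomp Require Import all_boot all_order all_algebra.
From mathcomp Require Import all_classical all_reals all_analysis.
Set Implicit Arguments. Unset Strict Implicit. Unset Printing Implicit Defensive.
Import Order.TTheory GRing.Theory Num.Theory.
Import numFieldNormedType.Exports.
Local Open Scope classical_set_scope.
Local Open Scope ring_scope.

Section Defs.
Variables (R : realType) (Y : normedModType R).

Definition riemann_sum (f : R -> Y) (n : nat) (x c : nat -> R) : Y :=
  \sum_(i < n) (x i.+1 - x i) *: f (c i).

Definition tagged_partition (a b : R) (n : nat) (x c : nat -> R) : Prop :=
  x 0%N = a /\ x n = b /\
  (forall i, (i < n)%N -> x i < x i.+1 /\ x i <= c i <= x i.+1).

Definition is_RInt (f : R -> Y) (a b : R) (I : Y) : Prop :=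
  forall e : R, 0 < e -> exists2 d : R, 0 < d &
    forall n x c, tagged_partition a b n x c ->
      (forall i, (i < n)%N -> x i.+1 - x i < d) ->
      `|riemann_sum f n x c - I| < e.

Definition is_RInt_inf (f : R -> Y) (a : R) (I : Y) : Prop :=
  forall e : R, 0 < e -> exists M : R, forall b, M < b ->
    exists2 J : Y, is_RInt f a b J & `|J - I| < e.

(** Strongly continuous semigroup of bounded linear operators on Y
    (T t is only meaningful for t >= 0). *)
Definition C0_semigroup (T : R -> Y -> Y) : Prop :=
  [/\ (forall t, 0 <= t -> forall (k : R) (y z : Y),
          T t (k *: y + z) = k *: T t y + T t z),
      (forall t, 0 <= t -> continuous (T t)),
      T 0 = id,
      (forall s t, 0 <= s -> 0 <= t -> T (s + t) = T s \o T t) &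
      (forall y : Y, T^~ y @ 0^'+ --> y)].

(** y is in the domain D(L) of the infinitesimal generator L of T
    and L y = z:  (T h y - y)/h --> z as h -> 0+. *)
Definition generator_at (T : R -> Y -> Y) (y z : Y) : Prop :=
  (fun h : R => h^-1 *: (T h y - y)) @ 0^'+ --> z.

Definition linear_operator_on (DA : set Y) (A : Y -> Y) : Prop :=
  DA 0 /\
  (forall (k : R) y z, DA y -> DA z -> DA (k *: y + z)) /\
  (forall (k : R) y z, DA y -> DA z -> A (k *: y + z) = k *: A y + A z).

End Defs.

(* Main.v *)
Require Import Defs.
From HB Require Import structures.
From mathcomp Require Import all_boot all_order all_algebra.
From mathcomp Require Import all_classical all_reals all_analysis.
From mathcomp Require Import zify lra.
Import Order.TTheory GRing.Theory Num.Theory.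
Import numFieldNormedType.Exports.
Local Open Scope classical_set_scope.
Local Open Scope ring_scope.

Set Implicit Arguments. Unset Strict Implicit. Unset Printing Implicit Defensive.

Section Parts.
Variables (R : realType) (Y : normedModType R).
Implicit Types (f : R -> Y) (x c : nat -> R).

Lemma ptn_mono a b n x c : tagged_partition a b n x c ->
  forall i j, (i <= j <= n)%N -> x i <= x j.
Proof.
move=> [_ [_ H]] i j; elim: j => [|j IH].
  by rewrite leqn0 => /andP[/eqP -> _].
move=> /andP[]; rewrite leq_eqVlt => /orP[/eqP -> //|ij jn].
have [/ltW h _] := H j jn.
by apply: le_trans h; apply: IH; rewrite -ltnS ij ltnW.
Qed.

Lemma ptn_range a b n x c : tagged_partition a b n x c ->
  forall i, (i < n)%N -> a <= c i <= b.
Proof.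
move=> P i lin; have [x0 [xn H]] := P.
have [_ /andP[h1 h2]] := H i lin.
apply/andP; split.
  by apply: le_trans h1; rewrite -x0; apply: (ptn_mono P); rewrite leq0n ltnW.
by apply: le_trans h2 _; rewrite -xn; apply: (ptn_mono P); rewrite lin leqnn.
Qed.

Lemma ptn_exists a b d : a < b -> 0 < d -> exists n x c,
  tagged_partition a b n x c /\ forall i, (i < n)%N -> x i.+1 - x i < d.
Proof.
move=> ab d0; set n := (Num.Def.trunc ((b - a) / d)).+1.
have n0 : (0 < n%:R :> R) by rewrite ltr0n.
set st := (b - a) / n%:R.
have st0 : 0 < st by rewrite divr_gt0 // subr_gt0.
have stx : forall i, a + i.+1%:R * st - (a + i%:R * st) = st.
  by move=> i; rewrite -addn1 natrD; lra.
exists n, (fun i => a + i%:R * st), (fun i => a + i%:R * st); split; last first.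
  move=> i _; rewrite stx /st ltr_pdivrMr // mulrC -ltr_pdivrMr //.
  exact: truncnS_gt.
split; first by rewrite mul0r addr0.
split; first by rewrite /st mulrC divfK ?gt_eqF // addrC subrK.
move=> i _; rewrite lexx /=; split; last first.
  by rewrite -subr_ge0 stx ltW.
by rewrite -subr_gt0 stx.
Qed.

Definition catp n1 x1 x2 : nat -> R := fun i => if (i < n1)%N then x1 i else x2 (i - n1)%N.

Lemma rs_cat f n1 x1 c1 n2 x2 c2 : x2 0%N = x1 n1 ->
  riemann_sum f (n1 + n2) (catp n1 x1 x2) (catp n1 c1 c2) =
  riemann_sum f n1 x1 c1 + riemann_sum f n2 x2 c2.
Proof.
move=> e; rewrite /riemann_sum big_split_ord /=; congr (_ + _).
  apply: eq_bigr => i _ /=; rewrite /catp /= ltn_ord.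
  case: ltnP => h; first by [].
  have -> : i.+1 = n1 by have := ltn_ord i; lia.
  by rewrite subnn e.
apply: eq_bigr => i _ /=; rewrite /catp /=.
have -> : (n1 + i < n1)%N = false by lia.
have -> : ((n1 + i).+1 < n1)%N = false by lia.
by rewrite -addnS !addKn.
Qed.

Lemma tp_cat (a m b : R) n1 x1 c1 n2 x2 c2 :
  tagged_partition a m n1 x1 c1 -> tagged_partition m b n2 x2 c2 ->
  tagged_partition a b (n1 + n2) (catp n1 x1 x2) (catp n1 c1 c2).
Proof.
move=> [a1 [c1' H1]] [a2 [b2 H2]]; split.
  rewrite /catp; case: n1 a1 c1' H1 => [|n1] a1 c1' H1 //=.
  by rewrite subn0 a2 -c1' a1.
split; first by rewrite /catp ltnNge leq_addr /= addKn.
move=> i lin; rewrite /catp.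
case: (ltnP i n1) => h.
  case: (ltnP i.+1 n1) => h'; first exact: H1.
  have ei : i.+1 = n1 by lia.
  rewrite ei subnn a2 -c1' -ei; exact: H1.
rewrite ltnNge (leq_trans h (leqnSn _)) /= subSn //.
by apply: H2; lia.
Qed.

Lemma mesh_cat n1 x1 n2 x2 d : x2 0%N = x1 n1 ->
  (forall i, (i < n1)%N -> x1 i.+1 - x1 i < d) ->
  (forall i, (i < n2)%N -> x2 i.+1 - x2 i < d) ->
  forall i, (i < n1 + n2)%N -> catp n1 x1 x2 i.+1 - catp n1 x1 x2 i < d.
Proof.
move=> e H1 H2 i lin; rewrite /catp.
case: (ltnP i n1) => h.
  case: (ltnP i.+1 n1) => h'; first exact: H1.
  have ei : i.+1 = n1 by lia.
  rewrite ei subnn e -ei; exact: H1.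
rewrite ltnNge (leq_trans h (leqnSn _)) /= subSn //.
by apply: H2; lia.
Qed.

End Parts.


Lemma zmod_id (V: zmodType) (I J S1 S2 z : V) : I - J - z = (S1 - z) - ((S1 + S2) - I) + (S2 - J).
Proof.
rewrite opprB opprD !addrA subrK.
by rewrite -(addrAC _ (-S1)) -(addrAC _ (-S1)) addrAC subrr add0r addrAC.
Qed.

Section Est.
Variables (R : realType) (Y : normedModType R).
Implicit Types (f : R -> Y) (x c : nat -> R).

Lemma rs_est f a b n x c y eps : tagged_partition a b n x c ->
  (forall u, a <= u <= b -> `|f u - y| <= eps) ->
  `|riemann_sum f n x c - (b - a) *: y| <= (b - a) * eps.
Proof.
move=> P Hf; have [x0 [xn H]] := P.
have tel : b - a = \sum_(i < n) (x i.+1 - x i).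
  by rewrite -(big_mkord xpredT (fun i => x i.+1 - x i)) telescope_sumr // xn x0.
rewrite tel scaler_suml /riemann_sum -sumrB mulr_suml.
apply: le_trans (ler_norm_sum _ _ _) _; apply: ler_sum => i _.
have [/ltW hx _] := H i (ltn_ord i).
rewrite -scalerBr normrZ ger0_norm ?subr_ge0 //.
by apply: ler_wpM2l; rewrite ?subr_ge0 //; apply: Hf; apply: (ptn_range P).
Qed.

Lemma split_est f a m b I J y eps : is_RInt f a b I -> is_RInt f m b J ->
  a < m -> m < b -> (forall u, a <= u <= m -> `|f u - y| <= eps) ->
  `|I - J - (m - a) *: y| <= (m - a) * eps.
Proof.
move=> HI HJ am mb Hf; apply/ler_addgt0Pr => e e0.
have e2 : 0 < e / 2 by rewrite divr_gt0.
have [d1 d10 H1] := HI _ e2; have [d2 d20 H2] := HJ _ e2.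
have d0 : 0 < Num.min d1 d2 by rewrite lt_min d10.
have [n1 [x1 [c1 [P1 M1]]]] := ptn_exists am d0.
have [n2 [x2 [c2 [P2 M2]]]] := ptn_exists mb d0.
have ex : x2 0%N = x1 n1 by case: P1 => _ [->]; case: P2 => ->.
have P := tp_cat P1 P2.
have M := mesh_cat ex M1 M2.
have h1 : `|riemann_sum f (n1 + n2) (catp n1 x1 x2) (catp n1 c1 c2) - I| < e / 2.
  by apply: H1 P _ => i hi; have := M i hi; rewrite lt_min => /andP[].
have h2 : `|riemann_sum f n2 x2 c2 - J| < e / 2.
  by apply: H2 P2 _ => i hi; have := M2 i hi; rewrite lt_min => /andP[].
have h3 := rs_est P1 Hf.
rewrite rs_cat // in h1.
rewrite (zmod_id _ _ (riemann_sum f n1 x1 c1) (riemann_sum f n2 x2 c2)).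
apply: le_trans (ler_normD _ _) _.
apply: le_trans (lerD (ler_normB _ _) (lexx _)) _.
rewrite (splitr e) !addrA; apply: lerD; last exact: ltW.
by apply: lerD => //; apply: ltW.
Qed.

Lemma RInt_restr f g a b J : (forall u, a <= u <= b -> f u = g u) ->
  is_RInt f a b J -> is_RInt g a b J.
Proof.
move=> fg H e e0; have [d d0 Hd] := H e e0; exists d => // n x c P M.
suff <- : riemann_sum f n x c = riemann_sum g n x c by exact: Hd.
apply: eq_bigr => i _; congr (_ *: _); apply: fg; exact: (ptn_range P).
Qed.

Lemma cont_eps (S : Y -> Y) y0 : {for y0, continuous S} ->
  forall e, 0 < e -> exists2 eta, 0 < eta & forall y, `|y0 - y| < eta -> `|S y0 - S y| < e.
Proof.
move=> cS e e0.
have /nbhs_ballP[r /= r0 H] : nbhs y0 (fun t => `|S y0 - S t| < e).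
  exact: (cvgr_dist_lt _ _ cS).
exists r => // y hy; apply: H.
by rewrite -ball_normE /=.
Qed.

Lemma RInt_map (S : Y -> Y) f a b J :
  (forall (k : R) y z, S (k *: y + z) = k *: S y + S z) -> continuous S ->
  is_RInt f a b J -> is_RInt (S \o f) a b (S J).
Proof.
move=> Sl Sc H e e0.
have S0 : S 0 = 0.
  have := Sl 1 0 0; rewrite !scale1r !addr0 => h.
  by apply: (@addrI _ (S 0)); rewrite -h addr0.
have SD : {morph S : u v / u + v}.
  by move=> u v; have := Sl 1 u v; rewrite !scale1r.
have SZ : forall k u, S (k *: u) = k *: S u.
  by move=> k u; rewrite -[k *: u]addr0 Sl S0 addr0.
have [eta eta0 Heta] := cont_eps (Sc J) e0.
have [d d0 Hd] := H eta eta0; exists d => // n x c P Mx.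
have -> : riemann_sum (S \o f) n x c = S (riemann_sum f n x c).
  rewrite /riemann_sum (big_morph S SD S0); apply: eq_bigr => i _.
  by rewrite SZ.
by rewrite distrC; apply: Heta; rewrite distrC; exact: Hd.
Qed.

End Est.


Lemma near_right0 (R : realType) (P : R -> Prop) :
  (\forall t \near 0^'+, P t) -> exists2 eta, 0 < eta & forall t, 0 < t < eta -> P t.
Proof.
rewrite /at_right /within /= => /nbhs_ballP[r r0 H]; exists r => // t /andP[t0 tr].
apply: H => //; rewrite -ball_normE /= sub0r normrN gtr0_norm //.
Qed.

Section Lin.
Variables (R : realType) (Y : normedModType R) (S : Y -> Y).
Hypothesis Sl : forall (k : R) y z, S (k *: y + z) = k *: S y + S z.

Lemma linS0 : S 0 = 0.
Proof.
have := Sl 1 0 0; rewrite !scale1r !addr0 => h.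
by apply: (@addrI _ (S 0)); rewrite -h addr0.
Qed.

Lemma linSD u v : S (u + v) = S u + S v.
Proof. by have := Sl 1 u v; rewrite !scale1r. Qed.

Lemma linSZ (k : R) u : S (k *: u) = k *: S u.
Proof. by rewrite -[k *: u]addr0 Sl linS0 addr0. Qed.

Lemma linSN u : S (- u) = - S u.
Proof. by rewrite -scaleN1r linSZ scaleN1r. Qed.

Lemma linSB u v : S (u - v) = S u - S v.
Proof. by rewrite linSD linSN. Qed.

End Lin.

Section LocalBound.
Variables (R : realType) (Y : completeNormedModType R).

Let pack_linear (f : Y -> Y) (lf : linear f) : {linear Y -> Y}
 := HB.pack f (GRing.isLinear.Build _ _ _ _ _ lf).

Lemma local_bound (T : R -> Y -> Y) : C0_semigroup T ->
  exists2 d, 0 < d & exists2 M, 0 < M &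
    forall t, 0 <= t <= d -> forall y, `|T t y| <= M * `|y|.
Proof.
move=> [Tl Tc T0 Ts Tcv].
apply: contrapT => Hn.
have H' : forall n : nat, exists ty : R * Y,
    (0 <= ty.1 <= (n.+1%:R)^-1) /\ n.+1%:R * `|ty.2| < `|T ty.1 ty.2|.
  move=> n; apply: contrapT => hn; apply: Hn.
  exists (n.+1%:R^-1); first by rewrite invr_gt0 ltr0n.
  exists n.+1%:R; first by rewrite ltr0n.
  move=> t ht y; rewrite leNgt; apply/negP => hlt; apply: hn.
  by exists (t, y).
case: (choice H') => ty Hty.
set F := [set f | exists n, f = T (ty n).1].
have : uniform_bounded F.
  apply: Banach_Steinhauss.
    move=> f [n ->]; have t0 : 0 <= (ty n).1 by case/andP: (proj1 (Hty n)).
    have lf : linear (T (ty n).1) by move=> k u v; exact: Tl.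
    split; last exact: lf.
    have [k k0 Hk] := @linear_lipschitz _ _ _ (pack_linear lf) (Tc _ t0).
    move=> r; exists (k * r) => x xr.
    by apply: le_trans (Hk x) _; rewrite ler_pM2l.
  move=> y.
  have : \forall t \near 0^'+, `|y - T t y| < 1.
    exact: (cvgr_dist_lt _ _ (Tcv y)).
  move=> /near_right0 [eta eta0 Heta].
  set N := Num.Def.trunc (eta^-1).
  exists (`|y| + 1 + \sum_(n < N) `|T (ty n).1 y|) => f [n ->].
  have sum0 : 0 <= \sum_(n < N) `|T (ty n).1 y| by apply: sumr_ge0.
  case: (ltnP n N) => nN.
    rewrite (bigD1 (Ordinal nN)) //= -addrA; apply: ler_wpDl => //.
    apply: ler_wpDl => //; apply: ler_wpDr => //; exact: sumr_ge0.
  have [t0 t1] := andP (proj1 (Hty n)).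
  rewrite ler_wpDr //.
  move: t0; rewrite le_eqVlt => /orP[/eqP <-|tpos].
    by rewrite T0 /= lerDl.
  have : `|y - T (ty n).1 y| < 1.
    apply: Heta; rewrite tpos /=; apply: le_lt_trans t1 _.
    rewrite -[eta]invrK ltf_pV2 ?posrE ?invr_gt0 ?ltr0n //.
    by apply: lt_le_trans (truncnS_gt _) _; rewrite ler_nat ltnS.
  move=> h; have := ler_normB y (y - T (ty n).1 y).
  rewrite opprB addrC subrK => /le_trans; apply.
  by rewrite lerD2l ltW.
move=> /(_ 1) [M0 HM0].
set n := Num.Def.trunc M0.
have [_ hn] := Hty n; set t := (ty n).1 in hn; set y := (ty n).2 in hn.
have t0 : 0 <= t by case/andP: (proj1 (Hty n)).
have [y0|y0] := eqVneq y 0.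
  by move: hn; rewrite y0 (linS0 (Tl _ t0)) !normr0 mulr0 ltxx.
have ny0 : 0 < `|y| by rewrite normr_gt0.
have := HM0 (T t) (ex_intro _ n erefl) (`|y|^-1 *: y).
rewrite normrZ normfV normr_id mulVf ?gt_eqF // lexx => /(_ isT).
rewrite (linSZ (Tl _ t0)) normrZ normfV normr_id ler_pdivrMl //.
move=> h; have := lt_le_trans hn h; rewrite [X in _ < X]mulrC ltr_pM2r //.
by rewrite ltNge ltW // truncnS_gt.
Qed.

End LocalBound.

Unset Implicit Arguments.
Set Strict Implicit.


Lemma zmod_id2 (V: zmodType) (a b c I K : V) : a - b - c = (I - K - c) - (I + b) + (K + a).
Proof.
rewrite opprD !addrA (addrC _ K) !addrA (addrC K I) addrK (addrAC I) subrr add0r.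
by rewrite [RHS]addrC -addrA (addrC (- c)).
Qed.

Lemma cont_eps2 (R : realType) (U V : normedModType R) (S : U -> V) y0 :
  {for y0, continuous S} ->
  forall e, 0 < e -> exists2 eta, 0 < eta & forall y, `|y0 - y| < eta -> `|S y0 - S y| < e.
Proof.
move=> cS e e0.
have /nbhs_ballP[r /= r0 H] : nbhs y0 (fun t => `|S y0 - S t| < e).
  exact: (cvgr_dist_lt _ _ cS).
exists r => // y hy; apply: H.
by rewrite -ball_normE /=.
Qed.

Arguments cont_eps2 {R U V S y0}.

Theorem theorem4p4 (R : realType) (Y : completeNormedModType R)
  (T : R -> Y -> Y) (DA : set Y) (A : Y -> Y) (xi : R -> Y) :
  C0_semigroup T ->
  linear_operator_on DA A ->
  (forall t, DA (xi t)) ->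
  (forall t, derivable xi t 1) ->
  continuous (derive1 xi) ->
  continuous (A \o xi) ->
  compact (closure [set t | xi t != 0]) ->
  (forall s, is_RInt_inf (fun u => T (u - s) (derive1 xi u + A (xi u))) s (- xi s)) ->
  forall t, generator_at T (xi t) (A (xi t)).
Proof.
move=> CT _ _ dxi cdxi cAxi _ Hint s.
have [d d0 [M M0 HM]] := local_bound CT.
case: CT => Tl Tc T0 Ts Tcv.
set g := fun u => derive1 xi u + A (xi u).
have gc : {for s, continuous g}.
  by apply: cvgD; [exact: cdxi | exact: cAxi].
have D : (fun h => h^-1 *: (xi (s - h) - xi s)) @ 0^'+ --> - derive1 xi s.
  have d1 : (fun h => h^-1 *: (xi (h + s) - xi s)) @ 0^' --> derive1 xi s.
    have := dxi s; rewrite /derivable derive1E /derive.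
    have -> : (fun h : R => h^-1 *: ((xi \o shift s) (h *: 1) - xi s)) =
              (fun h => h^-1 *: (xi (h + s) - xi s)).
      by apply/funext => h /=; rewrite /shift /= -[h *: 1]/(h * 1) mulr1.
    by [].
  have := cvg_dnbhs_at_left d1; rewrite cvg_at_leftNP oppr0 => /cvgN.
  have -> : - ((fun h => h^-1 *: (xi (h + s) - xi s)) \o -%R) =
            (fun h => h^-1 *: (xi (s - h) - xi s)).
    apply/funext => h; rewrite -[LHS]/(- ((- h)^-1 *: (xi (- h + s) - xi s))).
    by rewrite invrN scaleNr opprK (addrC (- h)).
  by [].
have E : (fun h => h^-1 *: (T h (xi s) - xi (s - h))) @ 0^'+ --> g s.
  apply/cvgrPdist_le => eps eps0.
  set ep := eps / 2.
  have ep0 : 0 < ep by rewrite divr_gt0.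
  have eM : 0 < ep / 2 / M by rewrite !divr_gt0.
  have [eta1 eta10 H1] := cont_eps2 gc _ eM.
  have : \forall t \near 0^'+, `|g s - T t (g s)| < ep / 2.
    by apply: (cvgr_dist_lt _ _ (Tcv (g s))); rewrite divr_gt0.
  move=> /near_right0 [eta2 eta20 H2].
  set del := Num.min d (Num.min eta1 eta2).
  have del0 : 0 < del by rewrite !lt_min d0 eta10 eta20.
  near=> h.
  have h0 : 0 < h by near: h; exact: nbhs_right_gt.
  have hd : h < del by near: h; exact: nbhs_right_lt.
  move: hd; rewrite !lt_min => /and3P[hd h1 h2].
  suff key : `|T h (xi s) - xi (s - h) - h *: g s| <= h * ep.
    have -> : g s = h^-1 *: (h *: g s) by rewrite scalerA mulVf ?gt_eqF // scale1r.
    rewrite -scalerBr normrZ.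
    rewrite ger0_norm ?invr_ge0 ?ltW // -opprB normrN.
    rewrite mulrC ltr_pdivrMr //; apply: le_lt_trans key _; rewrite /ep; nra.
  apply/ler_addgt0Pr => e e0.
  have e2 : 0 < e / 2 by rewrite divr_gt0.
  have [eta3 eta30 H3] := cont_eps2 (Tc h (ltW h0) (- xi s)) _ e2.
  have [M1 HM1] := Hint s eta3 eta30.
  have [M2 HM2] := Hint (s - h) _ e2.
  set b := Num.max (Num.max M1 M2) s + 1.
  have hb1 : M1 <= Num.max (Num.max M1 M2) s by rewrite !le_max lexx.
  have hb2 : M2 <= Num.max (Num.max M1 M2) s by rewrite !le_max lexx orbT.
  have hb3 : s <= Num.max (Num.max M1 M2) s by rewrite !le_max lexx orbT.
  have bM1 : M1 < b by rewrite /b; lra.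
  have bM2 : M2 < b by rewrite /b; lra.
  have bs : s < b by rewrite /b; lra.
  have [J HJ HJe] := HM1 b bM1.
  have [I HI HIe] := HM2 b bM2.
  have HJ' := RInt_map (Tl h (ltW h0)) (Tc h (ltW h0)) HJ.
  have HJ'' : is_RInt (fun u => T (u - (s - h)) (derive1 xi u + A (xi u))) s b (T h J).
    apply: RInt_restr HJ' => u /andP[su _] /=.
    have -> : u - (s - h) = h + (u - s) by lra.
    by rewrite (Ts h (u - s) (ltW h0)) ?subr_ge0.
  have hsh : s - h < s by lra.
  have := split_est (y := g s) (eps := ep) HI HJ'' hsh bs.
  have -> : s - (s - h) = h by lra.
  have bnd : forall u, s - h <= u <= s ->
      `|T (u - (s - h)) (derive1 xi u + A (xi u)) - g s| <= ep.
    move=> u /andP[hu1 hu2].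
    change (`|T (u - (s - h)) (g u) - g s| <= ep).
    set v := u - (s - h).
    have v0 : 0 <= v by rewrite /v; lra.
    have vh : v <= h by rewrite /v; lra.
    have -> : T v (g u) - g s = T v (g u - g s) + (T v (g s) - g s).
      by rewrite (linSB (Tl v v0)) addrA subrK.
    apply: le_trans (ler_normD _ _) _; rewrite (splitr ep); apply: lerD.
      apply: le_trans (HM v _ _) _; first by rewrite v0 /=; lra.
      rewrite -ler_pdivlMl // mulrC; apply: ltW; rewrite distrC; apply: H1.
      rewrite ger0_norm; lra.
    move: v0; rewrite le_eqVlt => /orP[/eqP <-|vpos].
      by rewrite T0 subrr normr0 divr_ge0 // ltW.
    rewrite distrC; apply: ltW; apply: H2; rewrite vpos /=; lra.
  move=> /(_ bnd) K.
  have HT := H3 J (eq_ind _ (fun z => z < eta3) HJe _ (distrC _ _)).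
  rewrite (linSN (Tl h (ltW h0))) in HT.
  rewrite (zmod_id2 _ _ _ _ I (T h J)).
  apply: le_trans (ler_normD _ _) _.
  apply: le_trans (lerD (ler_normB _ _) (lexx _)) _.
  rewrite (splitr e) !addrA; apply: lerD; last first.
    by apply: ltW; rewrite -normrN opprD addrC.
  apply: lerD => //; apply: ltW; rewrite opprK in HIe; exact: HIe.
have Ef : (fun h => h^-1 *: (T h (xi s) - xi s)) =
    (fun h => h^-1 *: (xi (s - h) - xi s) + h^-1 *: (T h (xi s) - xi (s - h))).
  by apply/funext => h; rewrite -scalerDr; congr (_ *: _); rewrite [RHS]addrC -addrA addKr.
rewrite /generator_at Ef.
have -> : A (xi s) = - derive1 xi s + g s by rewrite /g addrA addNr add0r.
exact: cvgD D E.
Unshelve. all: by end_near.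
Qed.
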